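(* Assume $\lambda<1-\frac1d$. Let $x$ be a fluid solution such that $x_{0,0}(t)>0$ for all $t\ge0$. Then there exist $\alpha>0$ and $\beta>0$ such that $\|x(t)-x^\star\|\le\alpha e^{-\beta t}$ for all $t\ge0$, where $x^\star$ is given by $x^\star_{0,0}=1-\lambda-\frac1d$, $x^\star_{0,1}=\frac1d$, $x^\star_{1,1}=\lambda$ and $x^\star_{i,j}=0$ otherwise, and $\|\cdot\|$ is the Euclidean norm.
   Context: Fix $\lambda\in(0,1)$, an integer $d\ge2$ and an integer $I>1$. $\mathcal S=\{x=(x_{i,j})_{0\le i\le j\le I}: x_{i,j}\ge0,\ \sum_{i=0}^I\sum_{j=i}^I x_{i,j}=1\}$; $x_{i,\cdot}=\sum_{j=i}^I x_{i,j}$, $x_{\cdot,j}=\sum_{i=0}^j x_{i,j}$. For $0\le j\le I$: $\mathcal R_j(x)=\max\{0,\lambda(1-d\sum_{i=0}^j(j+1-i)x_{i,\cdot})\}\,\mathbf 1\{\sum_{i=0}^j x_{\cdot,i}=0\}$, $\mathcal G_j(x)=\lambda d\,\mathbf 1\{\sum_{i=0}^j x_{\cdot,i}=0,\ d\sum_{i=0}^j(j+1-i)x_{i,\cdot}\le1\}\sum_{i=0}^j x_{i,\cdot}$. Write $\rho_k^{a,b}(x)=\mathcal R_k(x)\frac{x_{a,b}}{x_{\cdot,b}}\mathbf 1\{x_{\cdot,b}>0\}$ (equal to $0$ when $x_{\cdot,b}=0$). The drift $b(x)$ is: $b_{0,0}=\lambda d(x_{0,\cdot}-x_{0,0})-\lambda+\mathcal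 R_0(x)$; for $i<j$: $b_{i,j}=x_{i+1,j}-\mathbf 1\{i>0\}x_{i,j}-\lambda d x_{i,j}-\rho_{j-1}^{i,j}+\mathbf 1\{i>0\}\rho_{j-2}^{i-1,j-1}+\mathbf 1\{j=I,i>0\}\rho_{I-1}^{i-1,I}$; $b_{1,1}=-x_{1,1}+\lambda d(x_{1,\cdot}-x_{1,1})+\lambda-\mathcal R_0(x)-\rho_0^{1,1}-\mathcal G_1(x)$; for $2\le i\le I-1$: $b_{i,i}=-x_{i,i}+\lambda d(x_{i,\cdot}-x_{i,i})-\rho_{i-1}^{i,i}+\rho_{i-2}^{i-1,i-1}+\mathcal G_{i-1}(x)-\mathcal G_i(x)$; $b_{I,I}=-x_{I,I}+\rho_{I-2}^{I-1,I-1}+\mathcal G_{I-1}(x)+\rho_{I-1}^{I-1,I}$. A fluid solution is an absolutely continuous $x:\mathbb R_+\to\mathcal S$ with $\dot x_{i,j}(t)=b_{i,j}(x(t))$ for a.e. $t$ and all $i\le j$. *)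

(* Defs.v *)
From Stdlib Require Import Reals Lra Lia List.
Open Scope R_scope.

Fixpoint fsum (n : nat) (f : nat -> R) : R :=
  match n with
  | O => 0
  | S n' => fsum n' f + f n'
  end.

Definition ind0 (a : R) : R := if Req_EM_T a 0 then 1 else 0.
Definition bnat (b : bool) : R := if b then 1 else 0.

(* A state: x i j meaningful for 0 <= i <= j <= I. *)
Definition state := nat -> nat -> R.

Section Model.
Variables (lam : R) (d I : nat).

Definition dR : R := INR d.

Definition row (x : state) (i : nat) : R :=
  fsum (S I) (fun j => if Nat.leb i j then x i j else 0).
Definition col (x : state) (j : nat) : R :=
  fsum (S j) (fun i => x i j).

Definition in_S (x : state) : Prop :=
  (forall i j, (i <= j)%nat -> (j <= I)%nat -> 0 <= x i j) /\
  fsum (S I) (fun i => row x i) = 1.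

Definition wsum (x : state) (j : nat) : R :=
  fsum (S j) (fun i => INR (S j - i) * row x i).
Definition csum (x : state) (j : nat) : R :=
  fsum (S j) (fun i => col x i).

Definition Rj (x : state) (j : nat) : R :=
  Rmax 0 (lam * (1 - dR * wsum x j)) * ind0 (csum x j).

Definition Gj (x : state) (j : nat) : R :=
  lam * dR *
  (if Req_EM_T (csum x j) 0 then
     (if Rle_dec (dR * wsum x j) 1 then 1 else 0) else 0) *
  fsum (S j) (fun i => row x i).

Definition rho (x : state) (k a b : nat) : R :=
  if Rlt_dec 0 (col x b) then Rj x k * (x a b / col x b) else 0.

Definition drift (x : state) (i j : nat) : R :=
  if Nat.ltb i j then
    x (S i) j - bnat (Nat.ltb 0 i) * x i j - lam * dR * x i j
    - rho x (j - 1) i j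
    + bnat (Nat.ltb 0 i) * rho x (j - 2) (i - 1) (j - 1)
    + bnat (Nat.eqb j I && Nat.ltb 0 i) * rho x (I - 1) (i - 1) I
  else
  if Nat.eqb i 0 then
    lam * dR * (row x 0 - x 0%nat 0%nat) - lam + Rj x 0
  else if Nat.eqb i I then
    - x I I + rho x (I - 2) (I - 1) (I - 1) + Gj x (I - 1)
    + rho x (I - 1) (I - 1) I
  else if Nat.eqb i 1 then
    - x 1%nat 1%nat + lam * dR * (row x 1 - x 1%nat 1%nat) + lam - Rj x 0
    - rho x 0 1 1 - Gj x 1
  else
    - x i i + lam * dR * (row x i - x i i) - rho x (i - 1) i i
    + rho x (i - 2) (i - 1) (i - 1) + Gj x (i - 1) - Gj x i.

Definition xstar (i j : nat) : R :=
  match i, j with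
  | O, O => 1 - lam - / dR
  | O, S O => / dR
  | S O, S O => lam
  | _, _ => 0
  end.

Definition eucl_dist (x y : state) : R :=
  sqrt (fsum (S I) (fun i => fsum (S I) (fun j =>
          if Nat.leb i j then (x i j - y i j) ^ 2 else 0))).

End Model.

(* a <= u1 <= v1 <= u2 <= v2 <= ... <= b : non-overlapping subintervals of [a,b] *)
Fixpoint intervals_in (a b : R) (l : list (R * R)) : Prop :=
  match l with
  | nil => a <= b
  | (u, v) :: l' => a <= u /\ u <= v /\ intervals_in v b l'
  end.

Definition total_length (l : list (R * R)) : R :=
  fold_right (fun p s => (snd p - fst p) + s) 0 l.
Definition total_var (f : R -> R) (l : list (R * R)) : R :=
  fold_right (fun p s => Rabs (f (snd p) - f (fst p)) + s) 0 l.

Definition abs_cont_on (f : R -> R) (a b : R) : Prop :=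
  forall eps, 0 < eps -> exists delta, 0 < delta /\
    forall l, intervals_in a b l -> total_length l < delta ->
      total_var f l < eps.

Definition null_set (N : R -> Prop) : Prop :=
  forall eps, 0 < eps -> exists c e : nat -> R,
    (forall n, c n <= e n) /\
    (forall n, sum_f_R0 (fun k => e k - c k) n <= eps) /\
    (forall t, N t -> exists n, c n <= t <= e n).

(* fluid solution x : R_+ -> S (values at t < 0 are irrelevant) *)
Definition fluid_solution (lam : R) (d I : nat) (x : R -> state) : Prop :=
  (forall t, 0 <= t -> in_S I (x t)) /\
  (forall i j, (i <= j)%nat -> (j <= I)%nat ->
     forall T, 0 <= T -> abs_cont_on (fun t => x t i j) 0 T) /\
  (exists N, null_set N /\
     forall t, 0 < t -> ~ N t ->
       forall i j, (i <= j)%nat -> (j <= I)%nat ->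
         derivable_pt_lim (fun s => x s i j) t (drift lam d I (x t) i j)).

(* Main.v *)
Require Import Defs.
From Stdlib Require Import Reals Lra Lia List Classical.
Open Scope R_scope.

Lemma fsum_ext n f g : (forall k, (k < n)%nat -> f k = g k) -> fsum n f = fsum n g.
Proof. induction n; simpl; intros H; auto. rewrite IHn by (intros; apply H; lia). rewrite H by lia; auto. Qed.

Lemma fsum_plus n f g : fsum n (fun k => f k + g k) = fsum n f + fsum n g.
Proof. induction n; simpl; [lra|]. rewrite IHn; lra. Qed.

Lemma fsum_minus n f g : fsum n (fun k => f k - g k) = fsum n f - fsum n g.
Proof. induction n; simpl; [lra|]. rewrite IHn; lra. Qed.

Lemma fsum_scal n c f : fsum n (fun k => c * f k) = c * fsum n f.
Proof. induction n; simpl; [lra|]. rewrite IHn; lra. Qed.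

Lemma fsum_nonneg n f : (forall k, (k < n)%nat -> 0 <= f k) -> 0 <= fsum n f.
Proof. induction n; simpl; intros H; [lra|]. assert (0 <= f n) by (apply H; lia).
 assert (0 <= fsum n f) by (apply IHn; intros; apply H; lia). lra. Qed.

Lemma fsum_le n f g : (forall k, (k < n)%nat -> f k <= g k) -> fsum n f <= fsum n g.
Proof. induction n; simpl; intros H; [lra|]. assert (f n <= g n) by (apply H; lia).
 assert (fsum n f <= fsum n g) by (apply IHn; intros; apply H; lia). lra. Qed.

Lemma fsum_zero n f : (forall k, (k < n)%nat -> f k = 0) -> fsum n f = 0.
Proof. induction n; simpl; intros H; [lra|]. rewrite IHn by (intros; apply H; lia). rewrite H by lia; lra. Qed.

Lemma fsum_single n m f : (m < n)%nat -> (forall k, (k < n)%nat -> k <> m -> f k = 0) -> fsum n f = f m.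
Proof. induction n; simpl; intros Hm H; [lia|].
 destruct (Nat.eq_dec m n) as [->|Hne].
 - rewrite fsum_zero by (intros; apply H; lia). lra.
 - rewrite IHn by (try lia; intros; apply H; lia). rewrite (H n) by lia. lra. Qed.

Lemma fsum_sum_f_R0 n f : fsum (S n) f = sum_f_R0 f n.
Proof. induction n; simpl; [lra|]. simpl in IHn. rewrite <- IHn. lra. Qed.

Lemma fsum_geom M : fsum M (fun n => (/2)^(S n)) = 1 - (/2)^M.
Proof. induction M; [simpl; lra|]. change (fsum (S M) (fun n => (/2)^(S n))) with (fsum M (fun n => (/2)^(S n)) + (/2)^(S M)). rewrite IHM. simpl. lra. Qed.

Lemma fsum_abs n f : Rabs (fsum n f) <= fsum n (fun k => Rabs (f k)).
Proof. induction n; simpl. rewrite Rabs_R0; lra.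
 eapply Rle_trans. apply Rabs_triang. lra. Qed.

Lemma intervals_le a b l : intervals_in a b l -> a <= b.
Proof. revert a; induction l as [|[u v] l IH]; simpl; intros a H; [lra|].
 destruct H as [H1 [H2 H3]]. apply IH in H3. lra. Qed.

Lemma intervals_mono a s t l : intervals_in a s l -> s <= t -> intervals_in a t l.
Proof. revert a; induction l as [|[u v] l IH]; simpl; intros a H Hst; [lra|].
 destruct H as [H1 [H2 H3]]. repeat split; auto. Qed.

Lemma intervals_app a s t l : intervals_in a s l -> s <= t -> intervals_in a t (l ++ (s,t)::nil).
Proof. revert a; induction l as [|[u v] l IH]; simpl; intros a H Hst.
 - repeat split; lra.
 - destruct H as [H1 [H2 H3]]. repeat split; auto. Qed.

Lemma tl_app l s t : total_length (l ++ (s,t)::nil) = total_length l + (t - s).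
Proof. induction l as [|[u v] l IH]; simpl; [lra|]. rewrite IH; lra. Qed.

Lemma tv_app f l s t : total_var f (l ++ (s,t)::nil) = total_var f l + Rabs (f t - f s).
Proof. induction l as [|[u v] l IH]; simpl; [lra|]. rewrite IH; lra. Qed.

Lemma tv_nonneg f l : 0 <= total_var f l.
Proof. induction l as [|[u v] l IH]; simpl; [lra|]. pose proof (Rabs_pos (f v - f u)). lra. Qed.

Lemma tl_nonneg a b l : intervals_in a b l -> 0 <= total_length l.
Proof. revert a; induction l as [|[u v] l IH]; simpl; intros a H; [lra|].
 destruct H as [H1 [H2 H3]]. apply IH in H3. lra. Qed.

Lemma tv_transfer (y h : R -> R) (a b L : R) :
  0 <= L ->
  (forall u w, a <= u -> u <= w -> w <= b -> Rabs (h w - h u) <= Rabs (y w - y u) + L * (w - u)) ->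
  forall l a', a <= a' -> intervals_in a' b l ->
  total_var h l <= total_var y l + L * total_length l.
Proof. intros HL H l. induction l as [|[u v] l IH]; simpl; intros a' Ha' Hl; [lra|].
 destruct Hl as [H1 [H2 H3]]. pose proof (intervals_le _ _ _ H3).
 pose proof (H u v ltac:(lra) H2 H0). pose proof (IH v ltac:(lra) H3). nra. Qed.

Lemma ac_transfer (y h : R -> R) (a b L : R) :
  0 <= L ->
  (forall u w, a <= u -> u <= w -> w <= b -> Rabs (h w - h u) <= Rabs (y w - y u) + L * (w - u)) ->
  abs_cont_on y a b -> abs_cont_on h a b.
Proof. intros HL H Hac eps Heps.
 destruct (Hac (eps/2) ltac:(lra)) as [d [Hd Hy]].
 exists (Rmin d (eps / (2 * (L + 1)))). split.
 { apply Rmin_pos; auto. apply Rdiv_lt_0_compat; lra. }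
 intros l Hl Htl. pose proof (tv_transfer y h a b L HL H l a (Rle_refl _) Hl).
 assert (total_length l < d) by (eapply Rlt_le_trans; [exact Htl| apply Rmin_l]).
 assert (total_length l < eps / (2*(L+1))) by (eapply Rlt_le_trans; [exact Htl| apply Rmin_r]).
 pose proof (Hy l Hl H1). pose proof (tl_nonneg _ _ _ Hl).
 assert (L * total_length l <= eps / 2).
 { assert (L * total_length l <= L * (eps / (2*(L+1)))) by nra.
   assert (L * (eps / (2*(L+1))) <= eps/2).
   { unfold Rdiv. rewrite Rinv_mult. 
     assert (0 < / (L+1)) by (apply Rinv_0_lt_compat; lra).
     assert (L * / (L+1) <= 1).
     { apply (Rmult_le_reg_r (L+1)); [lra|]. rewrite Rmult_assoc, Rinv_l by lra. lra. }
     assert (0 < eps * /2) by lra. nra. }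
   lra. }
 lra. Qed.

Definition Lterm (C E : nat -> R) (n : nat) (s : R) := Rmax 0 (Rmin s (E n) - C n).
Definition Lsum C E M s := fsum M (fun n => Lterm C E n s).

Lemma Lterm_nonneg C E n s : 0 <= Lterm C E n s.
Proof. unfold Lterm. apply Rmax_l. Qed.

Lemma Lterm_mono C E n s t : s <= t -> Lterm C E n s <= Lterm C E n t.
Proof. intros. unfold Lterm. apply Rle_max_compat_l.
 assert (Rmin s (E n) <= Rmin t (E n)). { unfold Rmin; destruct Rle_dec; destruct Rle_dec; lra. } lra. Qed.

Lemma Lterm_le C E n s : C n <= E n -> Lterm C E n s <= E n - C n.
Proof. intros. unfold Lterm, Rmax, Rmin. repeat destruct Rle_dec; lra. Qed.

Lemma Lterm_incr C E n s t : C n <= s -> s <= t -> t <= E n ->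
  Lterm C E n s + (t - s) <= Lterm C E n t.
Proof. intros. unfold Lterm, Rmax, Rmin. repeat destruct Rle_dec; lra. Qed.

Lemma Lsum_mono C E M s t : s <= t -> Lsum C E M s <= Lsum C E M t.
Proof. intros. apply fsum_le. intros; apply Lterm_mono; auto. Qed.

Lemma Lsum_monoM C E M M' s : (M <= M')%nat -> Lsum C E M s <= Lsum C E M' s.
Proof. intros H. induction H; [lra|]. unfold Lsum in *; simpl.
 pose proof (Lterm_nonneg C E m s). lra. Qed.

Lemma Lsum_incr C E M n s t : (n < M)%nat -> C n <= s -> s <= t -> t <= E n ->
  Lsum C E M s + (t - s) <= Lsum C E M t.
Proof. intros HnM H1 H2 H3. induction M; [lia|]. unfold Lsum in *; simpl.
 destruct (Nat.eq_dec n M) as [->|Hne].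
 - pose proof (Lterm_incr C E M s t H1 H2 H3).
   pose proof (fsum_le M (fun n => Lterm C E n s) (fun n => Lterm C E n t) ltac:(intros; apply Lterm_mono; auto)). lra.
 - pose proof (IHM ltac:(lia)). pose proof (Lterm_mono C E M s t H2). lra. Qed.

Lemma Lsum_bound C E M s : (forall n, C n <= E n) -> Lsum C E M s <= fsum M (fun n => E n - C n).
Proof. intros. apply fsum_le. intros; apply Lterm_le; auto. Qed.

Lemma Rabs_le_between x y : Rabs x <= y -> - y <= x <= y.
Proof. intros H. pose proof (Rle_abs x). pose proof (Rle_abs (-x)). rewrite Rabs_Ropp in H1. lra. Qed.

Lemma deriv_local k p D eps : derivable_pt_lim k p D -> 0 < eps ->
  exists r, 0 < r /\ forall u, Rabs (u - p) < r -> Rabs (k u - k p - D * (u - p)) <= eps * Rabs (u - p).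
Proof. intros Hd He. destruct (Hd eps He) as [del Hdel]. exists del. split; [apply cond_pos|].
 intros u Hu. destruct (Req_dec u p) as [->|Hne].
 - replace (k p - k p - D * (p - p)) with 0 by ring. rewrite Rabs_R0, Rminus_diag, Rabs_R0; lra.
 - assert (u - p <> 0) by lra. specialize (Hdel (u - p) H Hu). replace (p + (u - p)) with u in Hdel by ring.
   replace (k u - k p - D * (u - p)) with ((u - p) * ((k u - k p) / (u - p) - D)) by (field; auto).
   rewrite Rabs_mult. pose proof (Rabs_pos (u-p)). nra. Qed.

Lemma good_point k p D eps : derivable_pt_lim k p D -> (0 < k p -> D <= 0) -> 0 < eps ->
  exists r, 0 < r /\ forall s t, p - r < s -> s <= p -> p <= t -> t < p + r ->
    k t <= k s + eps * (t - s) \/ k t <= eps.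
Proof. intros Hd HD He.
 destruct (deriv_local k p D eps Hd He) as [r0 [Hr0 Hloc]].
 exists (Rmin r0 (eps / (Rabs D + eps))). split.
 { apply Rmin_pos; auto. apply Rdiv_lt_0_compat; auto. pose proof (Rabs_pos D); lra. }
 intros s t H1 H2 H3 H4.
 assert (Hm1 := Rmin_l r0 (eps / (Rabs D + eps))). assert (Hm2 := Rmin_r r0 (eps / (Rabs D + eps))).
 set (m := Rmin r0 (eps / (Rabs D + eps))) in *.
 assert (Ht : Rabs (t - p) < r0) by (rewrite Rabs_right; lra).
 assert (Hs : Rabs (s - p) < r0) by (rewrite Rabs_left1; lra).
 pose proof (Hloc t Ht) as Lt. pose proof (Hloc s Hs) as Ls.
 rewrite (Rabs_right (t - p)) in Lt by lra. rewrite (Rabs_left1 (s - p)) in Ls by lra.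
 destruct (Rlt_le_dec 0 (k p)) as [Hp|Hp].
 - left. specialize (HD Hp). apply Rabs_le_between in Lt. apply Rabs_le_between in Ls.
   destruct Lt, Ls. nra.
 - right. apply Rabs_le_between in Lt. destruct Lt as [_ Lt].
   assert (D * (t - p) <= Rabs D * (t - p)). { pose proof (Rle_abs D). nra. }
   assert ((Rabs D + eps) * (t - p) <= eps).
   { assert (0 < Rabs D + eps) by (pose proof (Rabs_pos D); lra).
     assert (Htp : t - p <= eps / (Rabs D + eps)) by lra.
     apply (Rmult_le_compat_l (Rabs D + eps)) in Htp; [|lra].
     replace ((Rabs D + eps) * (eps / (Rabs D + eps))) with eps in Htp by (field; lra). lra. }
   nra. Qed.

Definition Qp k a eps C E s := exists M l, intervals_in a s l /\
  total_length l <= Lsum C E M s /\ k s <= eps * (s - a) + eps + total_var k l.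

Lemma Q_bad k a eps C E s t n : 0 < eps -> Qp k a eps C E s -> s <= t -> C n <= s -> t <= E n ->
  Qp k a eps C E t.
Proof. intros He [M [l [H1 [H2 H3]]]] Hst Hc He'.
 exists (Nat.max M (S n)), (l ++ (s,t)::nil). split; [|split].
 - apply intervals_app; auto.
 - rewrite tl_app. pose proof (Lsum_monoM C E M (Nat.max M (S n)) s ltac:(lia)).
   pose proof (Lsum_incr C E (Nat.max M (S n)) n s t ltac:(lia) Hc Hst He'). lra.
 - rewrite tv_app. pose proof (Rle_abs (k t - k s)). nra. Qed.

Lemma Q_good k a eps C E s t : 0 < eps -> Qp k a eps C E s -> a <= s -> s <= t ->
  (k t <= k s + eps * (t - s) \/ k t <= eps) -> Qp k a eps C E t.
Proof. intros He [M [l [H1 [H2 H3]]]] Has Hst Hk.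
 exists M, l. split; [|split].
 - eapply intervals_mono; eauto.
 - pose proof (Lsum_mono C E M s t Hst). lra.
 - pose proof (tv_nonneg k l). destruct Hk; nra. Qed.

Lemma Q_a k a eps C E : k a <= 0 -> 0 <= eps -> Qp k a eps C E a.
Proof. intros. exists O, nil. simpl. unfold Lsum; simpl. repeat split; lra. Qed.

Lemma core_eps k a b N eps :
  a <= b -> null_set N -> abs_cont_on k a b -> k a <= 0 ->
  (forall t, a < t -> t <= b -> ~ N t -> exists D, derivable_pt_lim k t D /\ (0 < k t -> D <= 0)) ->
  0 < eps -> k b <= eps * (b - a) + 2 * eps.
Proof.
 intros Hab Hnull Hac Hka Hder Heps.
 destruct (Hac eps Heps) as [del [Hdel Hac']].
 destruct (Hnull (del/4) ltac:(lra)) as [c [e [Hce [Hsum Hcov]]]].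
 set (C := fun n => c n - del/4 * (/2)^(S n)).
 set (E := fun n => e n + del/4 * (/2)^(S n)).
 assert (Hpw : forall n, 0 < (/2)^(S n)). { intros; apply pow_lt; lra. }
 assert (HCE : forall n, C n <= E n). { intros n; unfold C, E; specialize (Hce n); specialize (Hpw n); nra. }
 assert (HLs : forall M s, Lsum C E M s < del).
 { intros M s. eapply Rle_lt_trans. apply Lsum_bound; auto.
   assert (fsum M (fun n => E n - C n) = fsum M (fun n => e n - c n) + del/2 * fsum M (fun n => (/2)^(S n))).
   { rewrite (fsum_ext M (fun n => E n - C n) (fun n => (e n - c n) + del/2 * (/2)^(S n))).
     2:{ intros kk Hkk. unfold C, E. lra. }
     rewrite fsum_plus, fsum_scal. reflexivity. }
   rewrite H, fsum_geom.
   assert (fsum M (fun n => e n - c n) <= del/4).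
   { destruct M. simpl; lra. rewrite fsum_sum_f_R0. apply Hsum. }
   assert (0 < (/2)^M) by (apply pow_lt; lra). nra. }
 set (Es := fun s => a <= s <= b /\ Qp k a eps C E s).
 assert (HEa : Es a) by (split; [lra| apply Q_a; lra]).
 destruct (completeness Es) as [m [Hub Hlub]].
 { exists b. intros s [Hs _]; lra. }
 { exists a; auto. }
 assert (Ham : a <= m) by (apply Hub; auto).
 assert (Hmb : m <= b) by (apply Hlub; intros s [Hs _]; lra).
 assert (Happ : forall rr, 0 < rr -> exists s, Es s /\ m - rr < s).
 { intros rr Hrr. apply NNPP. intros Hn.
   assert (is_upper_bound Es (m - rr)).
   { intros s Hs. apply Rnot_lt_le. intros Hlt. apply Hn. exists s; auto. }
   apply Hlub in H. lra. }
 assert (HQm : Qp k a eps C E m).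
 { destruct (Req_dec m a) as [->|Hma]. { apply HEa. }
   destruct (classic (N m)) as [HN|HN].
   - destruct (Hcov m HN) as [n Hn].
     assert (C n < m) by (unfold C; specialize (Hpw n); nra).
     destruct (Happ (m - C n) ltac:(lra)) as [s [[Hs HQs] Hs2]].
     assert (s <= m) by (apply Hub; split; auto).
     apply (Q_bad k a eps C E s m n); auto; try lra. unfold E; specialize (Hpw n); nra.
   - destruct (Hder m ltac:(lra) Hmb HN) as [D [HD HD2]].
     destruct (good_point k m D eps HD HD2 Heps) as [r [Hr Hg]].
     destruct (Happ r Hr) as [s [[Hs HQs] Hs2]].
     assert (s <= m) by (apply Hub; split; auto).
     apply (Q_good k a eps C E s m); auto; try lra. apply Hg; lra. }
 assert (Hmeq : m = b).
 { destruct (Req_dec m b) as [|Hmb']; auto. exfalso.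
   assert (Hext : exists t, m < t /\ t <= b /\ Qp k a eps C E t).
   { destruct (Req_dec m a) as [->|Hma].
     - exists (Rmin b (a + del/2)). assert (Hm1 := Rmin_l b (a + del/2)). assert (Hm2 := Rmin_r b (a + del/2)).
       assert (a < Rmin b (a + del/2)) by (unfold Rmin; destruct Rle_dec; lra).
       split; [lra|split; [lra|]].
       apply (Q_good k a eps C E a); auto; try lra. right.
       assert (intervals_in a b ((a, Rmin b (a + del/2))::nil)) by (simpl; lra).
       specialize (Hac' _ H0). simpl in Hac'. specialize (Hac' ltac:(lra)).
       pose proof (Rle_abs (k (Rmin b (a + del / 2)) - k a)). lra.
     - destruct (classic (N m)) as [HN|HN].
       + destruct (Hcov m HN) as [n Hn].
         assert (m < E n) by (unfold E; specialize (Hpw n); nra).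
         assert (C n < m) by (unfold C; specialize (Hpw n); nra).
         exists (Rmin b ((m + E n)/2)). assert (Hm1 := Rmin_l b ((m + E n)/2)). assert (Hm2 := Rmin_r b ((m + E n)/2)).
         assert (m < Rmin b ((m + E n)/2)) by (unfold Rmin; destruct Rle_dec; lra).
         split; [lra|split; [lra|]].
         apply (Q_bad k a eps C E m _ n); auto; lra.
       + destruct (Hder m ltac:(lra) Hmb HN) as [D [HD HD2]].
         destruct (good_point k m D eps HD HD2 Heps) as [r [Hr Hg]].
         exists (Rmin b (m + r/2)). assert (Hm1 := Rmin_l b (m + r/2)). assert (Hm2 := Rmin_r b (m + r/2)).
         assert (m < Rmin b (m + r/2)) by (unfold Rmin; destruct Rle_dec; lra).
         split; [lra|split; [lra|]].
         apply (Q_good k a eps C E m); auto; try lra. apply Hg; lra. }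
   destruct Hext as [t [H1 [H2 H3]]].
   assert (t <= m) by (apply Hub; split; auto; lra). lra. }
 subst m. destruct HQm as [M [l [H1 [H2 H3]]]].
 specialize (Hac' l H1). specialize (HLs M b). specialize (Hac' ltac:(lra)). lra.
Qed.

Lemma core k a b N :
  a <= b -> null_set N -> abs_cont_on k a b -> k a <= 0 ->
  (forall t, a < t -> t <= b -> ~ N t -> exists D, derivable_pt_lim k t D /\ (0 < k t -> D <= 0)) ->
  k b <= 0.
Proof. intros. apply Rnot_lt_le. intros Hk.
 set (eps := k b / (b - a + 3)).
 assert (0 < eps) by (unfold eps; apply Rdiv_lt_0_compat; lra).
 pose proof (core_eps k a b N eps H H0 H1 H2 H3 H4).
 assert (eps * (b - a + 3) = k b) by (unfold eps; field; lra). nra. Qed.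

Lemma dlim_ext (f g : R -> R) t l l' : (forall u, f u = g u) -> l = l' ->
  derivable_pt_lim f t l -> derivable_pt_lim g t l'.
Proof. intros Hfg Hl Hf eps He. subst. destruct (Hf eps He) as [del Hd]. exists del.
 intros h Hh Hh2. rewrite <- !Hfg. auto. Qed.

Lemma dexp g t : derivable_pt_lim (fun u => exp (- g * u)) t (- g * exp (- g * t)).
Proof.
 assert (H1 : derivable_pt_lim (mult_real_fct (-g) id) t (-g * 1)).
 { apply derivable_pt_lim_scal. apply derivable_pt_lim_id. }
 pose proof (derivable_pt_lim_comp _ exp t _ _ H1 (derivable_pt_lim_exp _)) as H2.
 eapply dlim_ext; [| |exact H2].
 - intros u. unfold comp, mult_real_fct, id. reflexivity.
 - unfold mult_real_fct, id. ring. Qed.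

Lemma exp_le_exp x y : x <= y -> exp x <= exp y.
Proof. intros [H|H]. left; apply exp_increasing; auto. subst; lra. Qed.

Lemma exp_lip g u w : 0 <= g -> 0 <= u -> u <= w ->
  0 <= exp (- g * u) - exp (- g * w) <= g * (w - u).
Proof. intros Hg Hu Huw.
 replace (- g * w) with (- g * u + - g * (w - u)) by ring. rewrite exp_plus.
 assert (exp (- g * u) <= 1). { rewrite <- exp_0. apply exp_le_exp. nra. }
 assert (0 < exp (- g * u)) by apply exp_pos.
 assert (exp (- g * (w - u)) <= 1). { rewrite <- exp_0. apply exp_le_exp. nra. }
 pose proof (exp_ineq1_le (- g * (w - u))).
 assert (0 <= g * (w - u)) by nra.
 split; nra. Qed.

Lemma expo_up (y g : R -> R) N c b A :
  0 < b -> b < c -> 0 <= A -> null_set N ->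
  (forall T, 0 <= T -> abs_cont_on y 0 T) ->
  (forall t, 0 < t -> ~ N t -> derivable_pt_lim y t (- c * y t + g t)) ->
  (forall t, 0 <= t -> g t <= A * exp (- b * t)) ->
  forall t, 0 <= t -> y t <= (A / (c - b) + Rabs (y 0)) * exp (- b * t).
Proof.
 intros Hb Hbc HA Hnull Hac Hder Hg t Ht.
 set (K := A / (c - b)). set (Y0 := Rabs (y 0)).
 assert (HK : K * (c - b) = A) by (unfold K; field; lra).
 assert (HK0 : 0 <= K) by (unfold K; apply Rmult_le_pos; [lra| left; apply Rinv_0_lt_compat; lra]).
 assert (HY0 : 0 <= Y0) by apply Rabs_pos.
 set (v := fun u => y u - (K * exp (- b * u) + Y0 * exp (- c * u))).
 assert (Hv : v t <= 0).
 { apply (core v 0 t N Ht Hnull).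
   - apply (ac_transfer y v 0 t (K * b + Y0 * c)). { nra. }
     + intros u w H1 H2 H3. unfold v.
       pose proof (exp_lip b u w ltac:(lra) H1 H2). pose proof (exp_lip c u w ltac:(lra) H1 H2).
       eapply Rle_trans; [| apply Rplus_le_compat_l; apply Rle_refl].
       replace (y w - (K * exp (- b * w) + Y0 * exp (- c * w)) - (y u - (K * exp (- b * u) + Y0 * exp (- c * u))))
         with ((y w - y u) + (K * (exp (- b * u) - exp (- b * w)) + Y0 * (exp (- c * u) - exp (- c * w)))) by ring.
       eapply Rle_trans. apply Rabs_triang. apply Rplus_le_compat_l.
       rewrite Rabs_right by nra. nra.
     + apply Hac; lra.
   - unfold v. rewrite !Rmult_0_r, exp_0. pose proof (Rle_abs (y 0)). unfold Y0. lra.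
   - intros s Hs Hst HN. exists ((- c * y s + g s) - (K * (- b * exp (- b * s)) + Y0 * (- c * exp (- c * s)))).
     split.
     + eapply dlim_ext; [| reflexivity |].
       2:{ apply derivable_pt_lim_minus. apply Hder; auto.
           apply derivable_pt_lim_plus; apply derivable_pt_lim_scal; apply dexp. }
       intros u. unfold v, minus_fct, plus_fct, mult_real_fct. reflexivity.
     + intros Hvs. unfold v in Hvs. pose proof (Hg s ltac:(lra)).
       pose proof (exp_pos (- b * s)). pose proof (exp_pos (- c * s)).
       assert (0 < c * (y s - (K * exp (- b * s) + Y0 * exp (- c * s)))) by (apply Rmult_lt_0_compat; lra).
       nra. }
 unfold v in Hv.
 assert (exp (- c * t) <= exp (- b * t)) by (apply exp_le_exp; nra).
 nra. Qed.

Lemma expo (y g : R -> R) N c b A :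
  0 < b -> b < c -> 0 <= A -> null_set N ->
  (forall T, 0 <= T -> abs_cont_on y 0 T) ->
  (forall t, 0 < t -> ~ N t -> derivable_pt_lim y t (- c * y t + g t)) ->
  (forall t, 0 <= t -> Rabs (g t) <= A * exp (- b * t)) ->
  exists B, 0 <= B /\ forall t, 0 <= t -> Rabs (y t) <= B * exp (- b * t).
Proof.
 intros Hb Hbc HA Hnull Hac Hder Hg.
 exists (A / (c - b) + Rabs (y 0)). split.
 { pose proof (Rabs_pos (y 0)). assert (0 <= A / (c - b)) by (apply Rmult_le_pos; [lra| left; apply Rinv_0_lt_compat; lra]). lra. }
 intros t Ht. apply Rabs_le. split.
 - pose proof (expo_up (fun u => - y u) (fun u => - g u) N c b A Hb Hbc HA Hnull) as H.
   cbv beta in H. rewrite Rabs_Ropp in H.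
   assert (- y t <= (A / (c - b) + Rabs (y 0)) * exp (- b * t)).
   { apply H; auto.
     - intros T HT. apply (ac_transfer y _ 0 T 0); [lra| |apply Hac; auto].
       intros. replace (- y w - - y u) with (- (y w - y u)) by ring. rewrite Rabs_Ropp. lra.
     - intros s Hs HN. eapply dlim_ext; [intros; reflexivity| |apply derivable_pt_lim_opp; apply Hder; auto].
       ring.
     - intros s Hs. pose proof (Hg s Hs). pose proof (Rle_abs (- g s)). rewrite Rabs_Ropp in H1. lra. }
   lra.
 - apply (expo_up y g N c b A); auto. intros s Hs. pose proof (Hg s Hs). pose proof (Rle_abs (g s)). lra.
Qed.

Lemma fsum_S n f : fsum (S n) f = fsum n f + f n.
Proof. reflexivity. Qed.

Section Drift.
Variables (lam : R) (d I : nat) (x : state).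
Hypothesis HS : in_S I x.
Hypothesis Hx0 : 0 < x 0%nat 0%nat.

Lemma entry_nonneg i j : (i <= j)%nat -> (j <= I)%nat -> 0 <= x i j.
Proof. destruct HS as [H _]. apply H. Qed.

Lemma csum_pos k : (k <= I)%nat -> 0 < csum x k.
Proof. induction k; intros Hk.
 - unfold csum, col. simpl. lra.
 - unfold csum in *. rewrite fsum_S. assert (0 <= col x (S k)).
   { unfold col. apply fsum_nonneg. intros; apply entry_nonneg; lia. }
   specialize (IHk ltac:(lia)). lra. Qed.

Lemma Rj_zero k : (k <= I)%nat -> Rj lam d I x k = 0.
Proof. intros Hk. pose proof (csum_pos k Hk). unfold Rj, ind0. destruct Req_EM_T; [lra| ring]. Qed.

Lemma Gj_zero k : (k <= I)%nat -> Gj lam d I x k = 0.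
Proof. intros Hk. pose proof (csum_pos k Hk). unfold Gj. destruct Req_EM_T; [lra| ring]. Qed.

Lemma rho_zero k a b : (k <= I)%nat -> rho lam d I x k a b = 0.
Proof. intros Hk. unfold rho. rewrite Rj_zero by auto. destruct Rlt_dec; ring. Qed.

Lemma drift_off i j : (i < j)%nat -> (j <= I)%nat ->
  drift lam d I x i j = x (S i) j - bnat (Nat.ltb 0 i) * x i j - lam * dR d * x i j.
Proof. intros Hij HjI. unfold drift.
 replace (Nat.ltb i j) with true by (symmetry; apply Nat.ltb_lt; lia).
 rewrite !rho_zero by lia. ring. Qed.

Lemma drift_II : (1 < I)%nat -> drift lam d I x I I = - x I I.
Proof. intros HI. unfold drift.
 replace (Nat.ltb I I) with false by (symmetry; apply Nat.ltb_ge; lia).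
 replace (Nat.eqb I 0) with false by (symmetry; apply Nat.eqb_neq; lia).
 rewrite Nat.eqb_refl. rewrite !rho_zero by lia. rewrite Gj_zero by lia. ring. Qed.

Lemma drift_diag i : (1 <= i)%nat -> (i < I)%nat ->
  drift lam d I x i i = - x i i + lam * dR d * (row I x i - x i i) + (if Nat.eqb i 1 then lam else 0).
Proof. intros H1 H2. unfold drift.
 replace (Nat.ltb i i) with false by (symmetry; apply Nat.ltb_ge; lia).
 replace (Nat.eqb i 0) with false by (symmetry; apply Nat.eqb_neq; lia).
 replace (Nat.eqb i I) with false by (symmetry; apply Nat.eqb_neq; lia).
 destruct (Nat.eqb i 1) eqn:E.
 - apply Nat.eqb_eq in E; subst. rewrite Rj_zero, rho_zero, Gj_zero by lia. ring.
 - rewrite !rho_zero by lia. rewrite !Gj_zero by lia. ring. Qed.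

End Drift.

Definition off (I : nat) (x : state) (i : nat) := fsum (S I) (fun j => if Nat.ltb i j then x i j else 0).

Lemma row_off I x i : (i <= I)%nat -> row I x i = x i i + off I x i.
Proof. intros Hi. unfold row, off.
 assert (fsum (S I) (fun j => if Nat.leb i j then x i j else 0) - fsum (S I) (fun j => if Nat.ltb i j then x i j else 0) = x i i).
 { rewrite <- fsum_minus. rewrite (fsum_single (S I) i); [| lia |].
   - rewrite Nat.leb_refl. replace (Nat.ltb i i) with false by (symmetry; apply Nat.ltb_ge; lia). ring.
   - intros k Hk Hki. destruct (Nat.leb_spec i k); destruct (Nat.ltb_spec i k); try lia; ring. }
 lra. Qed.

Lemma fsum_two n f : (2 <= n)%nat -> (forall k, (2 <= k)%nat -> (k < n)%nat -> f k = 0) -> fsum n f = f 0%nat + f 1%nat.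
Proof. intros Hn. induction n; intros H; [lia|]. destruct (Nat.eq_dec n 1) as [->|Hne].
 - simpl. ring.
 - rewrite fsum_S. rewrite IHn by (try lia; intros; apply H; lia). rewrite (H n) by lia. ring. Qed.

Section Star.
Variables (lam : R) (d I : nat).
Hypothesis Hd : (2 <= d)%nat.
Hypothesis HI : (1 < I)%nat.

Lemma dR_pos : 0 < dR d.
Proof. unfold dR. apply lt_0_INR. lia. Qed.

Lemma xs_big i j : (2 <= i)%nat -> xstar lam d i j = 0.
Proof. intros H. destruct i as [|[|i]]; try lia. reflexivity. Qed.

Lemma xs_off i j : (1 <= i)%nat -> (i < j)%nat -> xstar lam d i j = 0.
Proof. intros H1 H2. destruct i as [|[|i]]; try lia.
 - destruct j as [|[|j]]; try lia. reflexivity.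
 - reflexivity. Qed.

Lemma xs_rel i j : (i < j)%nat ->
  xstar lam d (S i) j = (bnat (Nat.ltb 0 i) + lam * dR d) * xstar lam d i j.
Proof. intros H. pose proof dR_pos.
 destruct i as [|i].
 - destruct j as [|[|j]]; try lia.
   + simpl. unfold bnat; simpl. field. lra.
   + simpl. ring.
 - rewrite (xs_off (S i) j) by lia. rewrite xs_big by lia. ring. Qed.

Lemma xs_sum : fsum (S I) (fun i => row I (xstar lam d) i) = 1.
Proof.
 rewrite fsum_two; [| lia |].
 - unfold row. rewrite fsum_two; [| lia |].
   2:{ intros k H1 H2. destruct k as [|[|k]]; try lia. reflexivity. }
   rewrite (fsum_single (S I) 1); [| lia |].
   2:{ intros k H1 H2. destruct k as [|[|k]]; try lia. reflexivity. reflexivity. }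
   simpl. field. pose proof dR_pos. lra.
 - intros k H1 H2. unfold row. apply fsum_zero. intros j Hj.
   destruct (Nat.leb k j); [apply xs_big; lia | reflexivity]. Qed.

End Star.

Lemma fsum_exp_bound (f : R -> nat -> R) g n :
  (forall k, (k < n)%nat -> exists B, forall t, 0 <= t -> Rabs (f t k) <= B * exp (- g * t)) ->
  exists B, 0 <= B /\ forall t, 0 <= t -> Rabs (fsum n (f t)) <= B * exp (- g * t).
Proof. induction n; intros H.
 - exists 0. split; [lra|]. intros. simpl. rewrite Rabs_R0. lra.
 - destruct IHn as [B1 [HB1 H1]]. { intros; apply H; lia. }
   destruct (H n ltac:(lia)) as [B2 H2]. exists (B1 + Rabs B2). split. { pose proof (Rabs_pos B2); lra. }
   intros t Ht. rewrite fsum_S. eapply Rle_trans. apply Rabs_triang.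
   specialize (H1 t Ht). specialize (H2 t Ht). pose proof (exp_pos (- g * t)). pose proof (Rle_abs B2). nra. Qed.

Lemma step (x : R -> state) N i j c b X (Dr g : R -> R) :
  0 < b -> b < c -> null_set N ->
  (forall T, 0 <= T -> abs_cont_on (fun t => x t i j) 0 T) ->
  (forall t, 0 < t -> ~ N t -> derivable_pt_lim (fun s => x s i j) t (Dr t)) ->
  (forall t, 0 < t -> Dr t = - c * (x t i j - X) + g t) ->
  (exists A, forall t, 0 <= t -> Rabs (g t) <= A * exp (- b * t)) ->
  exists B, forall t, 0 <= t -> Rabs (x t i j - X) <= B * exp (- b * t).
Proof. intros Hb Hbc Hn Hac Hd HDr [A HA].
 destruct (expo (fun t => x t i j - X) g N c b (Rabs A) Hb Hbc (Rabs_pos A) Hn) as [B [_ HB]].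
 - intros T HT. apply (ac_transfer (fun t => x t i j) _ 0 T 0); [lra| |apply Hac; auto].
   intros. replace (x w i j - X - (x u i j - X)) with (x w i j - x u i j) by ring. lra.
 - intros t Ht HN. eapply dlim_ext; [| |apply derivable_pt_lim_minus; [apply Hd; auto| apply (derivable_pt_lim_const X)]].
   + intros u. unfold minus_fct, fct_cte. reflexivity.
   + rewrite HDr by auto. ring.
 - intros t Ht. pose proof (HA t Ht). pose proof (Rle_abs A). pose proof (exp_pos (- b * t)). nra.
 - exists B. auto. Qed.

Section Main.
Variables (lam : R) (d I : nat) (x : R -> state).
Hypothesis Hl : 0 < lam.
Hypothesis Hl1 : lam < 1.
Hypothesis Hd : (2 <= d)%nat.
Hypothesis HI : (1 < I)%nat.
Hypothesis Hfl : fluid_solution lam d I x.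
Hypothesis Hpos : forall t, 0 <= t -> 0 < x t 0%nat 0%nat.

Definition P i j := exists B, forall t, 0 <= t ->
  Rabs (x t i j - xstar lam d i j) <= B * exp (- (lam/2) * t).

Lemma dR_ge2 : 2 <= dR d.
Proof. unfold dR. replace 2 with (INR 2) by (simpl; ring). apply le_INR; auto. Qed.

Lemma P_off i j : (i < j)%nat -> (j <= I)%nat -> P (S i) j -> P i j.
Proof. intros Hij HjI [B HB]. destruct Hfl as [HS [Hac [N [Hnull Hder]]]].
 pose proof dR_ge2.
 assert (0 <= bnat (Nat.ltb 0 i)) by (unfold bnat; destruct Nat.ltb; lra).
 apply (step x N i j (bnat (Nat.ltb 0 i) + lam * dR d) (lam/2) _
   (fun t => drift lam d I (x t) i j) (fun t => x t (S i) j - xstar lam d (S i) j)).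
 - lra.
 - nra.
 - exact Hnull.
 - intros T HT. apply Hac; auto; lia.
 - intros t Ht HN. apply Hder; auto; lia.
 - intros t Ht. rewrite (drift_off lam d I); auto; try lia. rewrite (xs_rel lam d I Hd HI) by auto. ring.
   apply HS; lra. apply Hpos; lra.
 - exists B; auto.
Qed.

Lemma P_II : P I I.
Proof. destruct Hfl as [HS [Hac [N [Hnull Hder]]]].
 apply (step x N I I 1 (lam/2) _ (fun t => drift lam d I (x t) I I) (fun t => 0)).
 - lra.
 - lra.
 - exact Hnull.
 - intros T HT. apply Hac; auto.
 - intros t Ht HN. apply Hder; auto.
 - intros t Ht. rewrite (drift_II lam d I); auto. rewrite (xs_big lam d I Hd HI) by lia. ring. apply HS; lra. apply Hpos; lra.
 - exists 0. intros. rewrite Rabs_R0. lra.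
Qed.

Lemma P_diag i : (1 <= i)%nat -> (i < I)%nat -> (forall j, (i < j)%nat -> (j <= I)%nat -> P i j) -> P i i.
Proof. intros H1 H2 Hrow. destruct Hfl as [HS [Hac [N [Hnull Hder]]]].
 pose proof dR_ge2.
 apply (step x N i i 1 (lam/2) _ (fun t => drift lam d I (x t) i i) (fun t => lam * dR d * off I (x t) i)).
 - lra.
 - lra.
 - exact Hnull.
 - intros T HT. apply Hac; auto; lia.
 - intros t Ht HN. apply Hder; auto; lia.
 - intros t Ht. rewrite (drift_diag lam d I); auto; try lia. rewrite row_off by lia.
   destruct (Nat.eqb i 1) eqn:E.
   + apply Nat.eqb_eq in E; subst. simpl. ring.
   + apply Nat.eqb_neq in E. rewrite (xs_big lam d I Hd HI) by lia. ring.
   + apply HS; lra.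
   + apply Hpos; lra.
 - destruct (fsum_exp_bound (fun t k => if Nat.ltb i k then x t i k else 0) (lam/2) (S I)) as [B [HB0 HB]].
   + intros k Hk. destruct (Nat.ltb_spec i k).
     * destruct (Hrow k) as [B HB]; try lia. exists B. intros t Ht. specialize (HB t Ht).
       rewrite (xs_off lam d I Hd HI i k) in HB by lia. rewrite Rminus_0_r in HB. auto.
     * exists 0. intros. rewrite Rabs_R0. lra.
   + exists (lam * dR d * B). intros t Ht. specialize (HB t Ht). unfold off.
     rewrite Rabs_mult. rewrite (Rabs_right (lam * dR d)) by nra.
     assert (0 < lam * dR d) by nra. nra.
Qed.

Lemma rows : forall m, (m < I)%nat -> forall j, (I - m <= j)%nat -> (j <= I)%nat -> P (I - m) j.
Proof. induction m; intros Hm j H1 H2.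
 - replace (I - 0)%nat with I in * by lia. replace j with I by lia. apply P_II.
 - set (i := (I - S m)%nat) in *.
   assert (Hoff : forall j, (i < j)%nat -> (j <= I)%nat -> P i j).
   { intros j' Hj1 Hj2. apply P_off; auto. replace (S i) with (I - m)%nat by (unfold i; lia).
     apply IHm; unfold i in *; lia. }
   destruct (Nat.eq_dec j i) as [->|Hne].
   + apply P_diag; auto; unfold i; lia.
   + apply Hoff; lia.
Qed.

Lemma P_others i j : (i <= j)%nat -> (j <= I)%nat -> (i <> 0 \/ j <> 0)%nat -> P i j.
Proof. intros H1 H2 H3. destruct (Nat.eq_dec i 0) as [->|Hi].
 - apply P_off; try lia. replace 1%nat with (I - (I - 1))%nat by lia. apply rows; lia.
 - replace i with (I - (I - i))%nat by lia. apply rows; lia.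
Qed.

Definition W t i j := if Nat.leb i j then x t i j - xstar lam d i j else 0.
Definition W' t i j := if (Nat.eqb i 0 && Nat.eqb j 0)%bool then 0 else W t i j.

Lemma W_sum t : 0 <= t -> fsum (S I) (fun i => fsum (S I) (fun j => W t i j)) = 0.
Proof. intros Ht. destruct Hfl as [HS _]. destruct (HS t Ht) as [_ Hsum].
 pose proof (xs_sum lam d I Hd HI).
 assert (fsum (S I) (fun i => row I (x t) i) - fsum (S I) (fun i => row I (xstar lam d) i) = 0) by lra.
 rewrite <- fsum_minus in H0. rewrite <- H0. apply fsum_ext. intros i Hi.
 unfold row. rewrite <- fsum_minus. apply fsum_ext. intros j Hj. unfold W.
 destruct (Nat.leb i j); ring. Qed.

Lemma W_split t : fsum (S I) (fun i => fsum (S I) (fun j => W t i j)) - fsum (S I) (fun i => fsum (S I) (fun j => W' t i j))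
  = x t 0%nat 0%nat - xstar lam d 0 0.
Proof. rewrite <- fsum_minus. rewrite (fsum_single (S I) 0); [| lia |].
 - rewrite <- fsum_minus. rewrite (fsum_single (S I) 0); [| lia |].
   + unfold W', W. simpl. ring.
   + intros k Hk Hk0. unfold W'. replace (Nat.eqb k 0) with false by (symmetry; apply Nat.eqb_neq; auto).
     simpl. ring.
 - intros k Hk Hk0. rewrite <- fsum_minus. apply fsum_zero. intros j Hj. unfold W'.
   replace (Nat.eqb k 0) with false by (symmetry; apply Nat.eqb_neq; auto). simpl. ring.
Qed.

Lemma P_00 : P 0 0.
Proof.
 destruct (fsum_exp_bound (fun t i => fsum (S I) (fun j => W' t i j)) (lam/2) (S I)) as [B [HB0 HB]].
 - intros i Hi. destruct (fsum_exp_bound (fun t j => W' t i j) (lam/2) (S I)) as [B [HB0 HB]].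
   + intros j Hj. unfold W', W.
     destruct (Nat.eqb i 0 && Nat.eqb j 0)%bool eqn:E.
     * exists 0. intros. rewrite Rabs_R0. lra.
     * destruct (Nat.leb_spec i j).
       -- apply P_others; try lia. destruct (Nat.eq_dec i 0); destruct (Nat.eq_dec j 0); subst; auto; simpl in E; discriminate.
       -- exists 0. intros. rewrite Rabs_R0. lra.
   + exists B. auto.
 - exists B. intros t Ht. pose proof (W_split t). rewrite W_sum in H by auto.
   rewrite <- H. rewrite Rminus_0_l, Rabs_Ropp. apply HB; auto.
Qed.

Lemma P_all i j : (i <= j)%nat -> (j <= I)%nat -> P i j.
Proof. intros. destruct (Nat.eq_dec i 0) as [->|Hi]; destruct (Nat.eq_dec j 0) as [->|Hj].
 - apply P_00.
 - apply P_others; auto.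
 - lia.
 - apply P_others; auto. Qed.

Lemma final : exists alpha beta, 0 < alpha /\ 0 < beta /\
    forall t, 0 <= t -> eucl_dist I (x t) (xstar lam d) <= alpha * exp (- beta * t).
Proof.
 destruct (fsum_exp_bound (fun t i => fsum (S I) (fun j => if Nat.leb i j then (x t i j - xstar lam d i j) ^ 2 else 0)) lam (S I)) as [B [HB0 HB]].
 - intros i Hi. destruct (fsum_exp_bound (fun t j => if Nat.leb i j then (x t i j - xstar lam d i j) ^ 2 else 0) lam (S I)) as [B [HB0 HB]].
   + intros j Hj. destruct (Nat.leb_spec i j).
     * destruct (P_all i j) as [B HB]; try lia. exists (B ^ 2). intros t Ht. specialize (HB t Ht).
       rewrite Rabs_right by (apply Rle_ge; apply pow2_ge_0).
       rewrite <- pow2_abs.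
       assert (exp (- lam * t) = exp (- (lam/2) * t) * exp (- (lam/2) * t)) by (rewrite <- exp_plus; f_equal; lra).
       rewrite H0. pose proof (Rabs_pos (x t i j - xstar lam d i j)). nra.
     * exists 0. intros. rewrite Rabs_R0. lra.
   + exists B. auto.
 - exists (sqrt B + 1), (lam / 2). split; [pose proof (sqrt_pos B); lra|]. split; [lra|].
   intros t Ht. specialize (HB t Ht). unfold eucl_dist.
   set (e := exp (- (lam/2) * t)).
   assert (He : exp (- lam * t) = e ^ 2) by (unfold e; simpl; rewrite Rmult_1_r, <- exp_plus; f_equal; lra).
   rewrite He in HB.
   assert (0 < e) by (unfold e; apply exp_pos).
   eapply Rle_trans. apply sqrt_le_1_alt. eapply Rle_trans. apply Rle_abs. apply HB.
   replace (B * e ^ 2) with ((sqrt B * e) ^ 2) by (rewrite Rpow_mult_distr; simpl; rewrite !Rmult_1_r; rewrite sqrt_sqrt by auto; ring).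
   rewrite sqrt_pow2 by (pose proof (sqrt_pos B); nra). nra.
Qed.

End Main.

Theorem mainTheorem11 (lam : R) (d I : nat) (x : R -> state) :
  0 < lam -> lam < 1 -> (2 <= d)%nat -> (1 < I)%nat ->
  lam < 1 - / INR d ->
  fluid_solution lam d I x ->
  (forall t, 0 <= t -> 0 < x t 0%nat 0%nat) ->
  exists alpha beta, 0 < alpha /\ 0 < beta /\
    forall t, 0 <= t ->
      eucl_dist I (x t) (xstar lam d) <= alpha * exp (- beta * t).
Proof. intros. apply final; auto. Qed.
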